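(* Let $(X,\mathcal{O}(X))$ be a measurable space, $\mathcal{A}$ a unital $C^*$-algebra and $\mathcal{H}$ a finite-dimensional Hilbert space. Let $\mathcal{I}:\mathcal{O}(X)\to CP(\mathcal{A},\mathcal{B}(\mathcal{H}))$ be a UCP instrument which is $C^*$-extreme in $I_{\mathcal{H}}(X,\mathcal{A})$. Then its POVM marginal $\mu_\mathcal{I}$, $\mu_\mathcal{I}(A)=\mathcal{I}(A)(1_\mathcal{A})$, is a $C^*$-extreme point of the set of normalized POVMs on $(X,\mathcal{O}(X))$ with values in $\mathcal{B}(\mathcal{H})$.
   Context: A CP instrument is a map $\mathcal{I}$ from $\mathcal{O}(X)$ to the completely positive maps $\mathcal{A}\to\mathcal{B}(\mathcal{H})$ such that for all $a\in\mathcal{A}$, $h,k\in\mathcal{H}$, $A\mapsto\langle h,\mathcal{I}(A)(a)k\rangle$ is a countably additive complex measure. It is UCP if $\mathcal{I}(X)(1_\mathcal{A})=I_\mathcal{H}$; $I_{\mathcal{H}}(X,\mathcal{A})$ is the set of UCP instruments. $\mathcal{I}\in I_{\mathcal{H}}(X,\mathcal{A})$ is $C^*$-extreme if whenever $\mathcal{I}(\cdot)=\sum_{i=1}^nT_i^*\mathcal{I}_i(\cdot)T_i$ with $\mathcal{I}_i\in I_{\mathcal{H}}(X,\mathcal{A})$ and invertible $T_i\in\mathcal{B}(\mathcal{H})$ with $\sum T_i^*T_i=I_\mathcal{H}$, there are unitaries $U_i$ with $\mathcal{I}_i(\cdot)=U_i^*\mathcal{I}(\cdot)U_i$. Analogously,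 a normalized POVM $\mu$ ($\mu(X)=I_\mathcal{H}$) is $C^*$-extreme in the set of normalized POVMs if whenever $\mu(\cdot)=\sum_iT_i^*\mu_i(\cdot)T_i$ with normalized POVMs $\mu_i$ and invertible $T_i$ with $\sum T_i^*T_i=I_\mathcal{H}$, each $\mu_i$ is unitarily equivalent to $\mu$ ($\mu_i(\cdot)=U_i^*\mu(\cdot)U_i$ for unitaries $U_i$). *)

(* Defs.v *)
From HB Require Import structures.
From mathcomp Require Import all_boot all_order all_algebra.
From mathcomp Require Import complex.
From mathcomp Require Import classical_sets reals measure.
Set Implicit Arguments.
Unset Strict Implicit.
Unset Printing Implicit Defensive.
Import Order.TTheory GRing.Theory Num.Theory.
Local Open Scope ring_scope.
Local Open Scope classical_set_scope.

(* Complex matrices: B(H) for H = C^n (finite-dimensional Hilbert space) *)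

Definition adj (R : realType) (m p : nat) (M : 'M[R[i]]_(m, p)) : 'M[R[i]]_(p, m) :=
  (map_mx (@conjc R) M)^T.

Definition inner (R : realType) (n : nat) (h k : 'cV[R[i]]_n) : R[i] :=
  (adj h *m k) 0 0.

Definition psd (R : realType) (n : nat) (M : 'M[R[i]]_n) : Prop :=
  forall h : 'cV[R[i]]_n, 0 <= inner h (M *m h).

Definition unitary (R : realType) (n : nat) (U : 'M[R[i]]_n) : Prop :=
  adj U *m U = 1%:M /\ U *m adj U = 1%:M.

Record unital_Cstar_algebra (R : realType) (A : algType R[i]) := UnitalCstar {
  cs_star : A -> A;
  cs_norm : A -> R;
  cs_starD : forall a b, cs_star (a + b) = cs_star a + cs_star b;
  cs_starZ : forall (c : R[i]) a, cs_star (c *: a) = (c^*)%C *: cs_star a;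
  cs_starM : forall a b, cs_star (a * b) = cs_star b * cs_star a;
  cs_starK : forall a, cs_star (cs_star a) = a;
  cs_norm_ge0 : forall a, 0 <= cs_norm a;
  cs_norm_eq0 : forall a, cs_norm a = 0 -> a = 0;
  cs_normD : forall a b, cs_norm (a + b) <= cs_norm a + cs_norm b;
  cs_normZ : forall (c : R[i]) a, cs_norm (c *: a) = complex.Re `|c| * cs_norm a;
  cs_normM : forall a b, cs_norm (a * b) <= cs_norm a * cs_norm b;
  cs_Cstar_id : forall a, cs_norm (cs_star a * a) = cs_norm a ^+ 2;
  cs_complete : forall u : nat -> A,
    (forall e : R, 0 < e -> exists N : nat, forall p q : nat, (N <= p)%N -> (N <= q)%N ->
       cs_norm (u p - u q) < e) ->
    exists l : A, forall e : R, 0 < e -> exists N : nat, forall p : nat, (N <= p)%N ->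
       cs_norm (u p - l) < e
}.

Section CstarDefs.
Variables (R : realType) (A : algType R[i]) (S : unital_Cstar_algebra A).

Definition mx_star (k : nat) (M : 'M[A]_k) : 'M[A]_k :=
  \matrix_(i, j) cs_star S (M j i).

Definition mx_invertible (k : nat) (M : 'M[A]_k) : Prop :=
  exists N : 'M[A]_k, N *m M = 1%:M /\ M *m N = 1%:M.

(* positive elements of the C*-algebra M_k(A): self-adjoint with spectrum in [0, +oo) *)
Definition mx_positive (k : nat) (M : 'M[A]_k) : Prop :=
  mx_star M = M /\
  forall lam : R[i], ~ mx_invertible (M - (lam *: (1 : A))%:M) -> 0 <= lam.

Definition Clinear (n : nat) (phi : A -> 'M[R[i]]_n) : Prop :=
  forall (c : R[i]) (a b : A), phi (c *: a + b) = c *: phi a + phi b.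

(* completely positive maps A -> B(C^n): linear, and for every k the
   amplification phi^(k) : M_k(A) -> M_k(B(C^n)) = B((C^n)^k) maps positive
   elements to positive operators *)
Definition completely_positive (n : nat) (phi : A -> 'M[R[i]]_n) : Prop :=
  Clinear phi /\
  forall (k : nat) (M : 'M[A]_k), mx_positive M ->
    forall xi : 'I_k -> 'cV[R[i]]_n,
      0 <= \sum_(i < k) \sum_(j < k) inner (xi i) (phi (M i j) *m xi j).

End CstarDefs.

Section Measures.
Variables (R : realType) (d : measure_display) (X : measurableType d).

Definition cvgC (u : nat -> R[i]) (l : R[i]) : Prop :=
  forall e : R, 0 < e -> exists N : nat, forall m : nat, (N <= m)%N ->
    `|u m - l| < e%:C%C.

Definition countably_additive (f : set X -> R[i]) : Prop :=
  forall F : nat -> set X, (forall i, measurable (F i)) -> trivIset setT F ->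
    cvgC (fun N => \sum_(i < N) f (F i)) (f (\bigcup_i F i)).

Definition POVM (n : nat) (mu : set X -> 'M[R[i]]_n) : Prop :=
  (forall E, measurable E -> psd (mu E)) /\
  (forall h k : 'cV[R[i]]_n, countably_additive (fun E => inner h (mu E *m k))).

Definition normalized_POVM (n : nat) (mu : set X -> 'M[R[i]]_n) : Prop :=
  POVM mu /\ mu setT = 1%:M.

Definition Cstar_extreme_POVM (n : nat) (mu : set X -> 'M[R[i]]_n) : Prop :=
  normalized_POVM mu /\
  forall (m : nat) (T : 'I_m -> 'M[R[i]]_n) (mus : 'I_m -> set X -> 'M[R[i]]_n),
    (forall i, normalized_POVM (mus i)) ->
    (forall i, T i \in unitmx) ->
    \sum_(i < m) adj (T i) *m T i = 1%:M ->
    (forall E, measurable E -> mu E = \sum_(i < m) adj (T i) *m mus i E *m T i) ->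
    forall i, exists U : 'M[R[i]]_n, unitary U /\
      forall E, measurable E -> mus i E = adj U *m mu E *m U.

Variables (A : algType R[i]) (S : unital_Cstar_algebra A).

Definition CP_instrument (n : nat) (I : set X -> A -> 'M[R[i]]_n) : Prop :=
  (forall E, measurable E -> completely_positive S (I E)) /\
  (forall (a : A) (h k : 'cV[R[i]]_n),
     countably_additive (fun E => inner h (I E a *m k))).

Definition UCP_instrument (n : nat) (I : set X -> A -> 'M[R[i]]_n) : Prop :=
  CP_instrument I /\ I setT 1 = 1%:M.

Definition Cstar_extreme_instrument (n : nat) (I : set X -> A -> 'M[R[i]]_n) : Prop :=
  UCP_instrument I /\
  forall (m : nat) (T : 'I_m -> 'M[R[i]]_n) (Is : 'I_m -> set X -> A -> 'M[R[i]]_n),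
    (forall i, UCP_instrument (Is i)) ->
    (forall i, T i \in unitmx) ->
    \sum_(i < m) adj (T i) *m T i = 1%:M ->
    (forall E, measurable E -> forall a, I E a = \sum_(i < m) adj (T i) *m Is i E a *m T i) ->
    forall i, exists U : 'M[R[i]]_n, unitary U /\
      forall E, measurable E -> forall a, Is i E a = adj U *m I E a *m U.

Definition marginal (n : nat) (I : set X -> A -> 'M[R[i]]_n) : set X -> 'M[R[i]]_n :=
  fun E => I E 1.

End Measures.

(* Main.v *)
Require Import Defs.
From HB Require Import structures.
From mathcomp Require Import all_boot all_order all_algebra.
From mathcomp Require Import complex.
From mathcomp Require Import classical_sets reals measure.
From mathcomp Require Import sesquilinear spectral.
From mathcomp Require Import ring lra.
Set Implicit Arguments.
Unset Strict Implicit.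
Unset Printing Implicit Defensive.
Import Order.TTheory GRing.Theory Num.Theory.
Local Open Scope ring_scope.
Local Open Scope complex_scope.

Section Lin.
Variable R : realType.
Local Notation C := R[i].


Lemma adj_mul m p q (A : 'M[C]_(m, p)) (B : 'M[C]_(p, q)) :
  adj (A *m B) = adj B *m adj A.
Proof. by rewrite /adj map_mxM trmx_mul. Qed.

Lemma adjK m p (M : 'M[C]_(m, p)) : adj (adj M) = M.
Proof. by apply/matrixP=> i j; rewrite !mxE conjcK. Qed.

Lemma adjD m p (A B : 'M[C]_(m, p)) : adj (A + B) = adj A + adj B.
Proof. by apply/matrixP=> i j; rewrite !mxE rmorphD. Qed.

Lemma adjN m p (A : 'M[C]_(m, p)) : adj (- A) = - adj A.
Proof. by apply/matrixP=> i j; rewrite !mxE rmorphN. Qed.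

Lemma adjB m p (A B : 'M[C]_(m, p)) : adj (A - B) = adj A - adj B.
Proof. by rewrite adjD adjN. Qed.

Lemma adjZ m p c (A : 'M[C]_(m, p)) : adj (c *: A) = (c^*)%C *: adj A.
Proof. by apply/matrixP=> i j; rewrite !mxE rmorphM. Qed.

Lemma adj_scalar p (c : C) : adj (c%:M : 'M_p) = (c^*)%C%:M.
Proof.
by apply/matrixP=> i j; rewrite !mxE rmorphMn eq_sym.
Qed.

Lemma adj1 p : adj (1%:M : 'M[C]_p) = 1%:M.
Proof. by rewrite adj_scalar conjc1. Qed.

Lemma adj0 m p : adj (0 : 'M[C]_(m, p)) = 0.
Proof. by apply/matrixP=> i j; rewrite !mxE conjc0. Qed.

Lemma adj_sum m p (I : Type) (r : seq I) (F : I -> 'M[C]_(m, p)) :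
  adj (\sum_(i <- r) F i) = \sum_(i <- r) adj (F i).
Proof.
elim: r => [|x r IH]; first by rewrite !big_nil adj0.
by rewrite !big_cons adjD IH.
Qed.

Lemma adj_diag p (d : 'rV[C]_p) : adj (diag_mx d) = diag_mx (map_mx conjc d).
Proof. by rewrite /adj map_diag_mx tr_diag_mx. Qed.

Lemma conj_real (x : R) : ((x%:C)^*)%C = x%:C.
Proof. exact: conjc_real. Qed.

Lemma inner_mulr p (h : 'cV[C]_p) q (A : 'M[C]_(p, q)) k :
  inner h (A *m k) = inner (adj A *m h) k.
Proof. by rewrite /inner adj_mul adjK mulmxA. Qed.

Lemma innerDr p (h k1 k2 : 'cV[C]_p) : inner h (k1 + k2) = inner h k1 + inner h k2.
Proof. by rewrite /inner mulmxDr mxE. Qed.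
Lemma innerDl p (h1 h2 k : 'cV[C]_p) : inner (h1 + h2) k = inner h1 k + inner h2 k.
Proof. by rewrite /inner adjD mulmxDl mxE. Qed.
Lemma innerZr p c (h k : 'cV[C]_p) : inner h (c *: k) = c * inner h k.
Proof. by rewrite /inner -scalemxAr mxE. Qed.
Lemma innerZl p c (h k : 'cV[C]_p) : inner (c *: h) k = (c^*)%C * inner h k.
Proof. by rewrite /inner adjZ -scalemxAl mxE. Qed.
Lemma innerNr p (h k : 'cV[C]_p) : inner h (- k) = - inner h k.
Proof. by rewrite /inner mulmxN mxE. Qed.
Lemma inner0r p (h : 'cV[C]_p) : inner h 0 = 0.
Proof. by rewrite /inner mulmx0 mxE. Qed.
Lemma inner_sumr p (h : 'cV[C]_p) (I : Type) (r : seq I) (F : I -> 'cV[C]_p) :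
  inner h (\sum_(i <- r) F i) = \sum_(i <- r) inner h (F i).
Proof.
elim: r => [|x r IH]; first by rewrite !big_nil inner0r.
by rewrite !big_cons innerDr IH.
Qed.

Lemma inner_conj p (h k : 'cV[C]_p) : ((inner h k)^*)%C = inner k h.
Proof.
rewrite /inner; have -> : adj k *m h = adj (adj h *m k) by rewrite adj_mul adjK.
by rewrite /adj !mxE.
Qed.

Lemma inner_ge0 p (h : 'cV[C]_p) : 0 <= inner h h.
Proof.
rewrite /inner mxE; apply: sumr_ge0 => i _; rewrite !mxE mulrC.
exact: mulcJ_ge0.
Qed.

Lemma inner_eq0 p (h : 'cV[C]_p) : inner h h = 0 -> h = 0.
Proof.
rewrite /inner mxE => /eqP; rewrite psumr_eq0; last first.
  by move=> i _; rewrite !mxE mulrC; exact: mulcJ_ge0.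
move=> /allP H; apply/matrixP=> i j; rewrite ord1 mxE.
have /H := mem_index_enum i; rewrite !mxE => /eqP.
move/eqP; rewrite mulf_eq0 conjc_eq0 orbb => /eqP ->; done.
Qed.

Lemma adj_delta p (i : 'I_p) : adj (delta_mx i 0 : 'cV[C]_p) = delta_mx 0 i.
Proof.
apply/matrixP=> a b; rewrite !mxE.
by case: (b == i); case: (a == 0); rewrite ?conjc0 ?conjc1.
Qed.

Lemma inner_delta p (A : 'M[C]_p) i j :
  inner (delta_mx i 0) (A *m delta_mx j 0) = A i j.
Proof.
by rewrite /inner adj_delta mulmxA -rowE -colE !mxE.
Qed.

Lemma mx_ext_mul p q (A B : 'M[C]_(p, q)) :
  (forall k : 'cV[C]_q, A *m k = B *m k) -> A = B.
Proof.
move=> H; apply/matrixP=> i j.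
have := H (delta_mx j 0); rewrite -!colE => /matrixP /(_ i 0).
by rewrite !mxE.
Qed.

Lemma mx_ext_inner p (A B : 'M[C]_p) :
  (forall h k, inner h (A *m k) = inner h (B *m k)) -> A = B.
Proof.
by move=> H; apply/matrixP=> i j; rewrite -!inner_delta H.
Qed.

Lemma ge0_real (z : C) : 0 <= z -> z = (complex.Re z)%:C.
Proof. by case: z => a b; rewrite lecE /= => /andP[/eqP -> _]. Qed.

Lemma ge0_conj (z : C) : 0 <= z -> (z^*)%C = z.
Proof. by move/ge0_real => ->; rewrite conj_real. Qed.

Lemma polar p (K : 'M[C]_p) u v c :
  inner (u + c *: v) (K *m (u + c *: v)) =
  inner u (K *m u) + c * inner u (K *m v) + (c^*)%C * inner v (K *m u)
  + (c^*)%C * c * inner v (K *m v).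
Proof.
rewrite !mulmxDr -!scalemxAr !innerDl !innerDr !innerZl !innerZr.
ring.
Qed.

Lemma quad0_eq0 p (K : 'M[C]_p) : (forall h, inner h (K *m h) = 0) -> K = 0.
Proof.
move=> H; apply/matrixP=> i j; rewrite mxE -inner_delta.
set u := delta_mx i 0 : 'cV[C]_p; set v := delta_mx j 0 : 'cV[C]_p.
have h1 := polar K u v 1; have h2 := polar K u v 'i%C.
rewrite !H conjc1 !mul1r !add0r addr0 in h1.
rewrite !H in h2.
have ci : (('i%C : C)^*)%C = - 'i%C by apply/eqP; simpc.
rewrite ci mulr0 addr0 add0r in h2.
have e1 : inner v (K *m u) = - inner u (K *m v).
  by apply/eqP; rewrite -subr_eq0 opprK addrC -h1.
rewrite e1 mulrN mulNr opprK in h2.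
have : 'i%C * (2 * inner u (K *m v)) = 0 by rewrite h2; ring.
move/eqP; rewrite mulf_eq0 => /orP[/eqP|].
  by move/eqP; rewrite eq_complex /= oner_eq0 andbF.
by rewrite mulf_eq0 pnatr_eq0 /= => /eqP.
Qed.

Lemma psd_herm p (N : 'M[C]_p) : psd N -> adj N = N.
Proof.
move=> H; apply/eqP; rewrite -subr_eq0; apply/eqP; apply: quad0_eq0 => h.
have e : inner h (adj N *m h) = ((inner h (N *m h))^*)%C.
  by rewrite inner_mulr adjK inner_conj.
by rewrite mulmxBl innerDr innerNr e ge0_conj // subrr.
Qed.

Lemma psd_congr p (N B : 'M[C]_p) : psd N -> psd (adj B *m N *m B).
Proof.
by move=> H h; rewrite -!mulmxA inner_mulr adjK; exact: H.
Qed.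

Lemma psd_TT p (T : 'M[C]_p) : psd (adj T *m T).
Proof. by move=> h; rewrite -mulmxA inner_mulr adjK; exact: inner_ge0. Qed.

Lemma psd_add p (N1 N2 : 'M[C]_p) : psd N1 -> psd N2 -> psd (N1 + N2).
Proof. by move=> H1 H2 h; rewrite mulmxDl innerDr addr_ge0. Qed.

Lemma psd_ker p (N : 'M[C]_p) h : psd N -> inner h (N *m h) = 0 -> N *m h = 0.
Proof.
move=> H h0; have NH := psd_herm H.
set g := N *m h.
have e1 : inner h (N *m g) = inner g g by rewrite inner_mulr NH.
have key : forall t : R, 0 <= t%:C * inner g g + t%:C * inner g g
     + t%:C * t%:C * inner g (N *m g).
  move=> t; have := H (h + t%:C *: g).
  by rewrite polar h0 e1 conj_real add0r.
rewrite (ge0_real (inner_ge0 g)) in key.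
rewrite (ge0_real (H g)) in key.
have sr0 : 0 <= complex.Re (inner g g).
  by have := inner_ge0 g; rewrite {1}(ge0_real (inner_ge0 g)) ler0c.
have br0 : 0 <= complex.Re (inner g (N *m g)).
  by have := H g; rewrite {1}(ge0_real (H g)) ler0c.
set sr := complex.Re (inner g g) in key sr0 *.
set br := complex.Re (inner g (N *m g)) in key br0 *.
have key' : forall t, 0 <= t * sr + t * sr + t * t * br.
  by move=> t; have := key t; rewrite -!rmorphM -!rmorphD ler0c.
have : sr = 0.
  have hb : 0 < br + 1 by lra.
  have et : (- sr / (br + 1)) * (br + 1) = - sr by rewrite mulfVK // gt_eqF.
  have := key' (- sr / (br + 1)).
  move: (- sr / (br + 1)) et => t et H'.
  have e2 : sr = - t * (br + 1) by rewrite mulNr et opprK.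
  rewrite e2 in H' *.
  have : t * t * (br + 2) <= 0 by nra.
  move=> Ht; have : t * t = 0 by nra.
  by move/eqP; rewrite mulf_eq0 orbb => /eqP ->; rewrite oppr0 mul0r.
move=> sr00; apply: inner_eq0.
by rewrite (ge0_real (inner_ge0 g)) -/sr sr00.
Qed.

Lemma conj_fix (z : C) : (z^*)%C = z -> z = (complex.Re z)%:C.
Proof.
case: z => a b /= [] e; apply/eqP; rewrite eq_complex /= eqxx /=.
apply/eqP; lra.
Qed.

Lemma spectral_exists p (M : 'M[C]_p) : adj M = M ->
  exists (P : 'M[C]_p) (d : 'rV[C]_p), P *m adj P = 1%:M /\ M = adj P *m diag_mx d *m P.
Proof.
move=> MH; exists (spectralmx M), (spectral_diag M).
have e : invmx (spectralmx M) = adj (spectralmx M).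
  rewrite invmx_unitary; last exact: spectral_unitarymx.
  by rewrite /adj map_trmx.
split.
  by rewrite -e mulmxV // spectral_unit.
have Mn : M \is normalmx.
  by apply/normalmxP; rewrite -map_trmx -/(adj M) MH.
by rewrite -e; apply/orthomx_spectralP.
Qed.

Section FC.
Variables (p : nat) (M P : 'M[C]_p) (d : 'rV[C]_p).
Hypothesis MH : adj M = M.
Hypothesis PU : P *m adj P = 1%:M.
Hypothesis M_spec : M = adj P *m diag_mx d *m P.

Lemma UP : adj P *m P = 1%:M.
Proof. exact: mulmx1C PU. Qed.

Lemma D_spec : P *m M *m adj P = diag_mx d.
Proof.
rewrite M_spec.
by rewrite !mulmxA PU mul1mx -mulmxA PU mulmx1.
Qed.

Lemma d_real k : d 0 k = (complex.Re (d 0 k))%:C.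
Proof.
have : adj (diag_mx d) = diag_mx d.
  by rewrite -D_spec !adj_mul adjK MH mulmxA.
rewrite adj_diag => /matrixP /(_ k k); rewrite !mxE eqxx !mulr1n.
exact: conj_fix.
Qed.

Definition fcd (f : R -> R) : 'rV[C]_p := \row_k (f (complex.Re (d 0 k)))%:C.
Definition fc (f : R -> R) : 'M[C]_p := locked (adj P *m diag_mx (fcd f) *m P).

Lemma fc_id : fc id = M.
Proof.
rewrite /fc -!lock [RHS]M_spec; congr (_ *m diag_mx _ *m _).
by apply/matrixP=> i k; rewrite ord1 mxE -d_real.
Qed.

Lemma fc_mul f g : fc f *m fc g = fc (fun x => f x * g x).
Proof.
rewrite /fc -!lock !mulmxA -[adj P *m _ *m P *m adj P]mulmxA PU mulmx1.
rewrite -[adj P *m _ *m _]mulmxA mulmx_diag; congr (_ *m diag_mx _ *m _).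
by apply/matrixP=> i k; rewrite !mxE rmorphM.
Qed.

Lemma fc_add f g : fc f + fc g = fc (fun x => f x + g x).
Proof.
rewrite /fc -!lock -mulmxDl -mulmxDr -raddfD; congr (_ *m diag_mx _ *m _).
by apply/matrixP=> i k; rewrite !mxE rmorphD.
Qed.

Lemma fc_const c : fc (fun _ => c) = (c%:C)%:M.
Proof.
rewrite /fc -!lock.
have -> : fcd (fun _ => c) = const_mx c%:C by apply/matrixP=> i k; rewrite !mxE.
by rewrite diag_const_mx mul_mx_scalar -scalemxAl UP scalemx1.
Qed.

Lemma fc_scale c f : c%:C *: fc f = fc (fun x => c * f x).
Proof.
rewrite /fc -!lock scalemxAl scalemxAr; congr (_ *m _ *m _).
by apply/matrixP=> i j; rewrite !mxE mulrnAr rmorphM.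
Qed.

Lemma fc_adj f : adj (fc f) = fc f.
Proof.
rewrite /fc -!lock !adj_mul adjK adj_diag mulmxA; congr (_ *m diag_mx _ *m _).
by apply/matrixP=> i k; rewrite !mxE conj_real.
Qed.

Lemma fc_tr f : \tr (fc f) = \sum_k (f (complex.Re (d 0 k)))%:C.
Proof.
rewrite /fc -!lock mxtrace_mulC mulmxA PU mul1mx mxtrace_diag.
by apply: eq_bigr => k _; rewrite mxE.
Qed.

Lemma fc_ext f g : (forall k, f (complex.Re (d 0 k)) = g (complex.Re (d 0 k))) -> fc f = fc g.
Proof.
move=> H; rewrite /fc -!lock; congr (_ *m diag_mx _ *m _).
by apply/matrixP=> i k; rewrite !mxE H.
Qed.

Lemma fc_unit f : (forall k, f (complex.Re (d 0 k)) != 0) ->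
  fc f *m fc (fun x => (f x)^-1) = 1%:M.
Proof.
move=> H; rewrite fc_mul -(fc_const 1) ; apply: fc_ext => k; rewrite mulfV //.
Qed.

Lemma fc_diag f : P *m fc f *m adj P = diag_mx (fcd f).
Proof. by rewrite /fc -!lock !mulmxA PU mul1mx -mulmxA PU mulmx1. Qed.

Lemma fc_psd f k : psd (fc f) -> 0 <= f (complex.Re (d 0 k)).
Proof.
move=> H; rewrite -ler0c.
have -> : (f (complex.Re (d 0 k)))%:C = diag_mx (fcd f) k k by rewrite !mxE eqxx mulr1n.
have e := fc_diag f; move: (fc f) H e => F H e.
by rewrite -e -(inner_delta (P *m F *m adj P)) -!mulmxA inner_mulr; exact: H.
Qed.

Lemma diag_comm f (Y : 'M[C]_p) : diag_mx d *m Y = Y *m diag_mx d ->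
  diag_mx (fcd f) *m Y = Y *m diag_mx (fcd f).
Proof.
move=> DY; apply/matrixP=> i j; move/matrixP: DY => /(_ i j).
rewrite !mul_diag_mx !mul_mx_diag !mxE => e.
have [->|Yn] := eqVneq (Y i j) 0; first by rewrite mulr0 mul0r.
have : d 0 i = d 0 j.
  by apply: (mulIf Yn); rewrite e mulrC.
by move=> ->; rewrite mulrC.
Qed.

Lemma fc_comm (X : 'M[C]_p) f : X *m M = M *m X -> X *m fc f = fc f *m X.
Proof.
move=> XM.
have XE : X = adj P *m (P *m X *m adj P) *m P.
  by rewrite !mulmxA UP mul1mx -mulmxA UP mulmx1.
have DY : diag_mx d *m (P *m X *m adj P) = (P *m X *m adj P) *m diag_mx d.
  rewrite -D_spec !mulmxA -[P *m M *m adj P *m P]mulmxA UP mulmx1.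
  rewrite -[P *m M *m X]mulmxA -XM mulmxA.
  by rewrite -[P *m X *m adj P *m P]mulmxA UP mulmx1 -!mulmxA.
move: (P *m X *m adj P) XE DY => Y XE DY.
have DfY := diag_comm f DY.
have L : X *m fc f = adj P *m (Y *m diag_mx (fcd f)) *m P.
  by rewrite XE /fc -!lock -!mulmxA (mulmxA P (adj P)) PU mul1mx.
have L2 : fc f *m X = adj P *m (diag_mx (fcd f) *m Y) *m P.
  by rewrite XE /fc -!lock -!mulmxA (mulmxA P (adj P)) PU mul1mx.
by rewrite L L2 DfY.
Qed.
End FC.
End Lin.

Section Meas.
Variables (R : realType) (dd : measure_display) (X : measurableType dd).
Local Notation C := R[i].
Local Open Scope classical_set_scope.

Lemma small_eq0 (z : C) : (forall e : R, 0 < e -> `|z| < e%:C) -> z = 0.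
Proof.
move=> H; apply/eqP; apply/negPn/negP => zn.
have zp : 0 < `|z| by rewrite normr_gt0.
have e1 := ge0_real (ltW zp).
have h := H (complex.Re `|z|); rewrite -e1 ltxx in h; suff : false by []; apply: h.
by rewrite -ltcR -e1 rmorph0.
Qed.

Lemma cvgC_const (u : nat -> C) l c N0 :
  cvgC u l -> (forall m, (N0 <= m)%N -> u m = c) -> c = l.
Proof.
move=> cv uc; apply/eqP; rewrite -subr_eq0; apply/eqP; apply: small_eq0 => e e0.
have [N HN] := cv e e0.
by rewrite -(uc (maxn N N0)) ?leq_maxr // HN // leq_maxl.
Qed.

Lemma cvgC_ext (u v : nat -> C) l : (forall N, u N = v N) -> cvgC u l -> cvgC v l.
Proof.
by move=> E cv e e0; have [N HN] := cv e e0; exists N => m hm; rewrite -E; exact: HN.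
Qed.

Lemma cvgC_nat (x : C) : cvgC (fun N => x *+ N) x -> x = 0.
Proof.
move=> cv; apply: small_eq0 => e e0.
have e2 : 0 < e / 2 by rewrite divr_gt0.
have [N HN] := cv _ e2.
have h1 := HN N (leqnn N); have h2 := HN N.+1 (leqnSn N).
have -> : x = (x *+ N.+1 - x) - (x *+ N - x) by rewrite mulrS; ring.
apply: (le_lt_trans (ler_normB _ _)).
have -> : e%:C = (e / 2)%:C + (e / 2)%:C by rewrite -rmorphD; congr (_%:C); field.
exact: ltrD.
Qed.

Definition CA (n : nat) (f : set X -> 'M[C]_n) :=
  forall h k : 'cV[C]_n, countably_additive (fun E => inner h (f E *m k)).

Lemma CA_set0 n (f : set X -> 'M[C]_n) : CA f -> f set0 = 0.
Proof.
move=> H; apply: mx_ext_inner => h k; rewrite mul0mx inner0r.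
have e0 : \bigcup_i (fun _ : nat => set0 : set X) i = set0.
  by apply/seteqP; split => x // [].
have tr : trivIset setT (fun _ : nat => set0 : set X) by move=> i j _ _ [x []].
have := H h k (fun _ => set0) (fun _ => measurable0) tr; rewrite e0 => cv.
apply: cvgC_nat; apply: cvgC_ext cv => N.
by rewrite sumr_const card_ord.
Qed.

Lemma CA_add n (f : set X -> 'M[C]_n) A B : CA f -> measurable A -> measurable B ->
  A `&` B = set0 -> f (A `|` B) = f A + f B.
Proof.
move=> H mA mB AB; apply: mx_ext_inner => h k.
pose G (i : nat) := if i == 0%N then A else if i == 1%N then B else set0.
have mG : forall i, measurable (G i).
  by move=> [|[|i]]; rewrite /G //=.
have tG : trivIset setT G.
  move=> i j _ _ [x [Gi Gj]]; move: Gi Gj; rewrite /G.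
  case: i => [|[|i]]; case: j => [|[|j]] //= Gi Gj; try by case: Gi; try by case: Gj.
  1,2: have hh : (A `&` B) x by split.
  1,2: by rewrite AB in hh.
have UG : \bigcup_i G i = A `|` B.
  apply/seteqP; split => [x [[|[|i]] _ //=]|x [Ax|Bx]].
  - by left.
  - by right.
  - by exists 0%N.
  - by exists 1%N.
have := H h k G mG tG; rewrite UG => cv.
rewrite mulmxDl innerDr; apply/esym; apply: (cvgC_const cv (N0 := 2)) => m.
elim: m => [//|m IH]; rewrite leq_eqVlt => /orP[/eqP <-|].
  by rewrite !big_ord_recl big_ord0 addr0.
rewrite ltnS => hm; rewrite big_ord_recr /= (IH hm).
have -> : G m = set0 by case: m hm IH => [|[|m]].
by rewrite CA_set0 // mul0mx inner0r addr0.
Qed.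
End Meas.

Section CPsec.
Variables (R : realType) (A : algType R[i]) (S : unital_Cstar_algebra A).
Local Notation C := R[i].

Lemma star0 : cs_star S 0 = 0.
Proof.
have e := cs_starD S 0 0; rewrite addr0 in e.
by apply: (addrI (cs_star S 0)); rewrite addr0 -e.
Qed.

Lemma star1 : cs_star S 1 = 1.
Proof.
have := cs_starM S (cs_star S 1) 1; rewrite mulr1 !cs_starK mulr1.
by move=> <-.
Qed.

Lemma mx_pos1 : mx_positive S (1%:M : 'M[A]_1).
Proof.
split.
  apply/matrixP=> i j; rewrite /mx_star !mxE !ord1 eqxx mulr1n; exact: star1.
move=> lam ninv; case: (eqVneq lam 1) => [->|ne]; first exact: ler01.
exfalso; apply: ninv; exists ((1 - lam)^-1 *: 1)%:M.
have e : (1 : A) - lam *: 1 = (1 - lam) *: 1 by rewrite scalerBl scale1r.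
have ne' : 1 - lam != 0 by rewrite subr_eq0 eq_sym.
split; apply/matrixP=> i j; rewrite !ord1 !mxE big_ord1 !mxE eqxx !mulr1n e.
  by rewrite -scalerAl mul1r scalerA mulVf // scale1r.
by rewrite -scalerAl mul1r scalerA mulfV // scale1r.
Qed.

Lemma cp_psd n (phi : A -> 'M[C]_n) : completely_positive S phi -> psd (phi 1).
Proof.
case=> _ H h; have := H 1%N 1%:M mx_pos1 (fun _ => h).
by rewrite !big_ord1 mxE eqxx mulr1n.
Qed.

Lemma cp_comb n (phi1 phi2 : A -> 'M[C]_n) (al be : R) (B : 'M[C]_n) :
  completely_positive S phi1 -> completely_positive S phi2 -> 0 <= al -> 0 <= be ->
  completely_positive S (fun a => adj B *m (al%:C *: phi1 a + be%:C *: phi2 a) *m B).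
Proof.
move=> [l1 H1] [l2 H2] al0 be0; split.
  move=> c a b; rewrite l1 l2.
  set x := phi1 a; set y := phi1 b; set z := phi2 a; set w := phi2 b.
  have E : al%:C *: (c *: x + y) + be%:C *: (c *: z + w) =
           c *: (al%:C *: x + be%:C *: z) + (al%:C *: y + be%:C *: w).
    by rewrite !scalerDr !scalerA [al%:C * c]mulrC [be%:C * c]mulrC addrACA.
  by rewrite E mulmxDr mulmxDl -scalemxAr -scalemxAl.
move=> k M MP xi.
have term : forall i j, inner (xi i) (adj B *m (al%:C *: phi1 (M i j) + be%:C *: phi2 (M i j)) *m B *m xi j)
   = al%:C * inner (B *m xi i) (phi1 (M i j) *m (B *m xi j))
     + be%:C * inner (B *m xi i) (phi2 (M i j) *m (B *m xi j)).
  move=> i j; rewrite -!mulmxA inner_mulr adjK mulmxDl innerDr.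
  by rewrite -!scalemxAl !innerZr.
under eq_bigr => i _ do under eq_bigr => j _ do rewrite term.
under eq_bigr => i _ do rewrite big_split /= -!mulr_sumr.
rewrite big_split /= -!mulr_sumr.
apply: addr_ge0; apply: mulr_ge0; rewrite ?ler0c //.
  exact: (H1 k M MP (fun i => B *m xi i)).
exact: (H2 k M MP (fun i => B *m xi i)).
Qed.
End CPsec.

Section Meas2.
Variables (R : realType) (dd : measure_display) (X : measurableType dd).
Local Notation C := R[i].
Local Open Scope classical_set_scope.

Lemma cvgC_add (u v : nat -> C) l1 l2 : cvgC u l1 -> cvgC v l2 ->
  cvgC (fun N => u N + v N) (l1 + l2).
Proof.
move=> cu cv e e0.
have e2 : 0 < e / 2 by rewrite divr_gt0.
have [N1 H1] := cu _ e2; have [N2 H2] := cv _ e2.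
exists (maxn N1 N2) => m hm.
have -> : u m + v m - (l1 + l2) = (u m - l1) + (v m - l2) by ring.
apply: (le_lt_trans (ler_normD _ _)).
have -> : e%:C = (e / 2)%:C + (e / 2)%:C by rewrite -rmorphD; congr (_%:C); field.
apply: ltrD.
  by apply: H1; apply: leq_trans hm; exact: leq_maxl.
by apply: H2; apply: leq_trans hm; exact: leq_maxr.
Qed.

Lemma cvgC_ext2 (u v : nat -> C) l l' : (forall N, u N = v N) -> l = l' ->
  cvgC u l -> cvgC v l'.
Proof. by move=> E <- cv; apply: cvgC_ext cv. Qed.

Lemma CA_restr (g : set X -> C) E : measurable E -> countably_additive g ->
  countably_additive (fun F => g (F `&` E)).
Proof.
move=> mE cg F mF tF.
have mF' : forall i, measurable (F i `&` E) by move=> i; exact: measurableI.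
have tF' : trivIset setT (fun i => F i `&` E).
  by move=> i j _ _ [x [[Fi _] [Fj _]]]; apply: tF => //; exists x.
have := cg _ mF' tF'.
by rewrite -setI_bigcupl.
Qed.

Lemma CA_comb n (g : set X -> 'M[C]_n) E (B : 'M[C]_n) (al be : R) :
  measurable E -> CA g ->
  CA (fun F => adj B *m (al%:C *: g (F `&` E) + be%:C *: g (F `&` ~` E)) *m B).
Proof.
move=> mE cg h k.
have mE' : measurable (~` E) by exact: measurableC.
have c1 := CA_restr mE (cg (B *m h) (al%:C *: (B *m k))).
have c2 := CA_restr mE' (cg (B *m h) (be%:C *: (B *m k))).
move=> F mF tF; have := cvgC_add (c1 F mF tF) (c2 F mF tF).
have eq : forall G, inner h (adj B *m (al%:C *: g (G `&` E) + be%:C *: g (G `&` ~` E)) *m B *m k)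
  = inner (B *m h) (g (G `&` E) *m (al%:C *: (B *m k))) + inner (B *m h) (g (G `&` ~` E) *m (be%:C *: (B *m k))).
  move=> G; rewrite -!mulmxA inner_mulr adjK mulmxDl innerDr -!scalemxAl -!scalemxAr.
  done.
move=> cv; apply: (cvgC_ext2 _ (esym (eq _)) cv) => N.
rewrite -big_split /=.
by apply: eq_bigr => i _; rewrite (eq (F i)).
Qed.
End Meas2.

Section Main.
Variables (R : realType) (dd : measure_display) (X : measurableType dd).
Variables (A : algType R[i]) (S : unital_Cstar_algebra A) (n : nat).
Variable (I : set X -> A -> 'M[R[i]]_n).
Hypothesis HI : UCP_instrument S I.
Local Notation C := R[i].
Local Open Scope classical_set_scope.

Lemma I_CA a : CA (fun E => I E a).
Proof. by move=> h k; exact: HI.1.2 a h k. Qed.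

Lemma I_set0 a : I set0 a = 0.
Proof. exact: (CA_set0 (I_CA a)). Qed.

Lemma I_split a F E : measurable F -> measurable E ->
  I F a = I (F `&` E) a + I (F `&` ~` E) a.
Proof.
move=> mF mE.
have m1 : measurable (F `&` E) by exact: measurableI.
have m2 : measurable (F `&` ~` E) by apply: measurableI => //; exact: measurableC.
have d12 : (F `&` E) `&` (F `&` ~` E) = set0 by rewrite setIACA setICr setI0.
have h := CA_add (I_CA a) m1 m2 d12; rewrite /= in h.
by rewrite -h -setIUr setUCr setIT.
Qed.

Lemma mu_psd E : measurable E -> psd (I E 1).
Proof. by move=> mE; apply: cp_psd; exact: HI.1.1 E mE. Qed.

Lemma mu_compl E : measurable E -> I (~` E) 1 = 1%:M - I E 1.
Proof.
move=> mE; have := I_split 1 measurableT mE; rewrite !setTI HI.2 => ->.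
by rewrite addrC addKr.
Qed.

Hypothesis HX : Cstar_extreme_instrument S I.

Lemma mu_proj E : measurable E -> I E 1 *m I E 1 = I E 1.
Proof.
move=> mE.
have mEc : measurable (~` E) by exact: measurableC.
have Mpsd := mu_psd mE.
have MH := psd_herm Mpsd.
have [P [d [PU Ms]]] := spectral_exists MH.
set M := I E 1 in Mpsd MH Ms *.
pose r (k : 'I_n) := complex.Re (d 0 k).
have fid : fc P d id = M := fc_id MH PU Ms.
have r0 : forall k, 0 <= r k.
  by move=> k; have := @fc_psd _ _ _ d PU id k; rewrite fid; apply.
have e1M : fc P d (fun x => 1 - x) = 1%:M - M.
  have -> : fc P d (fun x => 1 - x) = fc P d (fun _ => 1) + (-1)%:C *: fc P d id.
    by rewrite fc_scale fc_add; apply: fc_ext => k /=; rewrite mulN1r.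
  by rewrite (fc_const d PU) fid rmorph1 rmorphN1 scaleN1r.
have r1 : forall k, r k <= 1.
  move=> k; have := @fc_psd _ _ _ d PU (fun x => 1 - x) k; rewrite e1M subr_ge0; apply.
  by rewrite -mu_compl //; exact: mu_psd.
have fc1 : (1%:M : 'M[C]_n) = fc P d (fun _ => 1) by rewrite (fc_const d PU) rmorph1.
pose q (al x : R) := al * x + (1 - al) * (1 - x).
pose s al x := Num.sqrt (q al x).
have qpos : forall al k, 0 < al < 1 -> 0 < q al (r k).
  move=> al k /andP[a0 a1]; have := r0 k; have := r1 k; rewrite /q => h1 h0.
  nra.
have spos : forall al k, 0 < al < 1 -> 0 < s al (r k).
  by move=> al k hal; rewrite sqrtr_gt0 qpos.
have ss : forall al k, 0 < al < 1 -> s al (r k) * s al (r k) = q al (r k).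
  by move=> al k hal; rewrite -expr2 sqr_sqrtr // ltW // qpos.
pose T al := fc P d (s al).
pose Ti al := fc P d (fun x => (s al x)^-1).
have TTi : forall al, 0 < al < 1 -> T al *m Ti al = 1%:M.
  by move=> al hal; apply: fc_unit => // k; rewrite gt_eqF // spos.
have TiT : forall al, 0 < al < 1 -> Ti al *m T al = 1%:M.
  by move=> al hal; apply: mulmx1C; exact: TTi.
have eqq : forall al, al%:C *: M + (1 - al)%:C *: (1%:M - M) = fc P d (q al).
  move=> al; rewrite -e1M -{1}fid !fc_scale fc_add.
  by apply: fc_ext => k.
pose als (i : 'I_2) : R := if i == ord0 then 2 / 3 else 1 / 3.
have als01 : forall i, 0 < als i < 1.
  by move=> i; rewrite /als; case: (i == ord0); apply/andP; split; lra.
pose Is (i : 'I_2) (F : set X) (a : A) := adj (Ti (als i)) *m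
   ((als i)%:C *: I (F `&` E) a + (1 - als i)%:C *: I (F `&` ~` E) a) *m Ti (als i).
pose Ts (i : 'I_2) := T (als i).
have UCP : forall i, UCP_instrument S (Is i).
  move=> i; have [a0 a1] := andP (als01 i); split; [split|].
  - move=> F mF; apply: cp_comb; rewrite ?subr_ge0 ?ltW //.
      by apply: (proj1 (proj1 HI)); exact: measurableI.
    by apply: (proj1 (proj1 HI)); exact: measurableI.
  - move=> a h k; exact: (CA_comb (Ti (als i)) (als i) (1 - als i) mE (I_CA a) h k).
  - rewrite /Is !setTI (mu_compl mE) -/M eqq fc_adj !(fc_mul d PU) [RHS]fc1.
    apply: fc_ext => k; rewrite -(ss _ _ (als01 i)).
    by field; rewrite gt_eqF // spos.
have Tunit : forall i, Ts i \in unitmx.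
  by move=> i; have [] := mulmx1_unit (TTi _ (als01 i)).
have Tsum : \sum_(i < 2) adj (Ts i) *m Ts i = 1%:M.
  rewrite !big_ord_recr big_ord0 /= add0r /Ts /T !fc_adj !(fc_mul d PU) fc_add.
  rewrite [RHS]fc1; apply: fc_ext => k /=.
  by rewrite !ss ?als01 // /q /als /=; field.
have Tdec : forall F, measurable F -> forall a, I F a = \sum_(i < 2) adj (Ts i) *m Is i F a *m Ts i.
  move=> F mF a.
  have term : forall i, adj (Ts i) *m Is i F a *m Ts i =
      (als i)%:C *: I (F `&` E) a + (1 - als i)%:C *: I (F `&` ~` E) a.
    move=> i; rewrite /Is /Ts !mulmxA -adj_mul (TiT _ (als01 i)) adj1 mul1mx.
    by rewrite -mulmxA (TiT _ (als01 i)) mulmx1.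
  rewrite (eq_bigr _ (fun i _ => term i)) !big_ord_recr big_ord0 /= add0r.
  rewrite (I_split a mF mE) addrACA -!scalerDl -!rmorphD.
  have -> : als (widen_ord (leqnSn 1) ord_max) + als ord_max = 1 by rewrite /als /=; field.
  have -> : (1 - als (widen_ord (leqnSn 1) ord_max)) + (1 - als ord_max) = 1.
    by rewrite /als /=; field.
  by rewrite !rmorph1 !scale1r.
have [U [[U1 U2] eqU]] := HX.2 2 Ts Is UCP Tunit Tsum Tdec ord0.
have e0 := eqU E mE 1.
rewrite /Is setIid setICr I_set0 scaler0 addr0 -/M in e0.
pose a0 := als ord0.
have a001 : 0 < a0 < 1 := als01 ord0.
have e0' : adj (Ti a0) *m (a0%:C *: M) *m Ti a0 = fc P d (fun x => a0 * x / q a0 x).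
  rewrite fc_adj -{1}fid fc_scale !(fc_mul d PU); apply: fc_ext => k.
  by rewrite -(ss _ _ a001); field; exact: (lt0r_neq0 (spos _ k a001)).
rewrite -/a0 e0' in e0.
have tr : \tr (fc P d (fun x => a0 * x / q a0 x)) = \tr (fc P d id).
  by rewrite e0 fid mxtrace_mulC mulmxA U2 mul1mx.
rewrite !(fc_tr d PU) in tr.
have tr' : \sum_k (a0 * r k / q a0 (r k) - r k) = 0.
  rewrite sumrB; apply/eqP; rewrite subr_eq0; apply/eqP; apply: complexI.
  rewrite !rmorph_sum; exact: tr.
have idk : forall k, a0 * r k / q a0 (r k) - r k = (a0 * r k - r k * q a0 (r k)) / q a0 (r k).
  by move=> k; field; exact: (lt0r_neq0 (qpos _ k a001)).
have nonneg : forall k, true -> 0 <= a0 * r k / q a0 (r k) - r k.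
  move=> k _; rewrite idk; apply: divr_ge0; last exact: (ltW (qpos _ k a001)).
  have := r0 k; have := r1 k; rewrite /q /a0 /als /= => h1 h0; nra.
have each := psumr_eq0P nonneg tr'.
have rr : forall k, r k * r k = r k.
  move=> k; have := each k isT; rewrite idk => /eqP.
  rewrite mulf_eq0 invr_eq0 (gt_eqF (qpos _ k a001)) orbF => /eqP e2.
  have : r k * r k - r k = -3 * (a0 * r k - r k * q a0 (r k)) by rewrite /q /a0 /als /=; field.
  by rewrite e2 mulr0 => /eqP; rewrite subr_eq0 => /eqP.
rewrite -fid (fc_mul d PU); apply: fc_ext => k; exact: rr k.
Qed.

Lemma partC (m : nat) (T : 'I_m -> 'M[C]_n) (mus : 'I_m -> set X -> 'M[C]_n) :
  (forall i, normalized_POVM (mus i)) ->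
  (forall i, T i \in unitmx) ->
  \sum_(i < m) adj (T i) *m T i = 1%:M ->
  (forall E, measurable E -> I E 1 = \sum_(i < m) adj (T i) *m mus i E *m T i) ->
  forall i, exists U : 'M[C]_n, unitary U /\
    forall E, measurable E -> mus i E = adj U *m I E 1 *m U.
Proof.
move=> Hmus HT Hsum Hdec i.
have musCA : forall j, CA (mus j) by move=> j h k; exact: (Hmus j).1.2 h k.
have mus_compl : forall j E, measurable E -> mus j (~` E) = 1%:M - mus j E.
  move=> j E mE.
  have mEc : measurable (~` E) by exact: measurableC.
  have := CA_add (musCA j) mE mEc (setICr E); rewrite setUCr (Hmus j).2 => ->.
  by rewrite addrC addKr.
pose nu j E := adj (T j) *m mus j E *m T j.
have nu_psd : forall j E, measurable E -> psd (nu j E).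
  by move=> j E mE; apply: psd_congr; exact: (Hmus j).1.1 E mE.
pose Q := adj (T i) *m T i.
have kerE : forall E, measurable E -> nu i E *m (1%:M - I E 1) = 0.
  move=> E mE; apply: mx_ext_mul => g; rewrite mul0mx -mulmxA.
  set h := (1%:M - I E 1) *m g.
  have Ph : I E 1 *m h = 0.
    by rewrite /h mulmxA mulmxBr mulmx1 (mu_proj mE) subrr mul0mx.
  apply: psd_ker; first exact: nu_psd.
  have tot : \sum_(j < m) inner h (nu j E *m h) = 0.
    by rewrite -inner_sumr -mulmx_suml -(Hdec E mE) Ph inner0r.
  have nn : forall j, true -> 0 <= inner h (nu j E *m h).
    by move=> j _; exact: nu_psd.
  exact: (psumr_eq0P nn tot isT).
have nuQ : forall E, measurable E -> nu i E + nu i (~` E) = Q.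
  move=> E mE; rewrite /nu (mus_compl i E mE) -mulmxDl -mulmxDr addrC subrK.
  by rewrite mulmx1.
have QP : forall E, measurable E -> Q *m I E 1 = nu i E.
  move=> E mE.
  have mEc : measurable (~` E) by exact: measurableC.
  have k1 := kerE E mE.
  have k2 := kerE _ mEc; rewrite (mu_compl mE) opprB addrC subrK in k2.
  rewrite mulmxBr mulmx1 in k1.
  move/eqP: k1; rewrite subr_eq0 => /eqP k1.
  by rewrite -(nuQ E mE) mulmxDl k2 addr0 -k1.
have QH : adj Q = Q by rewrite /Q adj_mul adjK.
have Qcomm : forall E, measurable E -> I E 1 *m Q = Q *m I E 1.
  move=> E mE.
  have PH := psd_herm (mu_psd mE).
  have nH := psd_herm (nu_psd i E mE).
  by rewrite -[in LHS]PH -[in LHS]QH -adj_mul QP // nH QP.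
have [PQ [dQ [PU Qs]]] := spectral_exists QH.
have fid : fc PQ dQ id = Q := fc_id QH PU Qs.
have r0 : forall k, 0 <= complex.Re (dQ 0 k).
  by move=> k; have := @fc_psd _ _ _ dQ PU id k; rewrite fid; apply; exact: psd_TT.
pose Rt := fc PQ dQ Num.sqrt.
have RR : Rt *m Rt = Q.
  rewrite /Rt (fc_mul dQ PU) -fid; apply: fc_ext => k.
  by rewrite -expr2 sqr_sqrtr.
have RH : adj Rt = Rt by exact: fc_adj.
have Rcomm : forall E, measurable E -> I E 1 *m Rt = Rt *m I E 1.
  by move=> E mE; apply: (fc_comm PU Qs); exact: Qcomm.
pose Ti := invmx (T i).
have TTi : T i *m Ti = 1%:M by rewrite mulmxV.
have TiT : Ti *m T i = 1%:M by rewrite mulVmx.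
pose U := Rt *m Ti.
have UU : adj U *m U = 1%:M.
  rewrite /U adj_mul RH !mulmxA -[adj Ti *m Rt *m Rt]mulmxA RR /Q.
  by rewrite !mulmxA -adj_mul TTi adj1 mul1mx TTi.
exists U; split; first by split => //; exact: mulmx1C.
move=> E mE.
rewrite /U adj_mul RH !mulmxA -[adj Ti *m Rt *m I E 1]mulmxA -Rcomm // mulmxA.
rewrite -[adj Ti *m I E 1 *m Rt *m Rt]mulmxA RR -[adj Ti *m I E 1 *m Q]mulmxA Qcomm // QP // /nu !mulmxA -adj_mul TTi adj1 mul1mx.
by rewrite -mulmxA TTi mulmx1.
Qed.
End Main.

Local Close Scope complex_scope.
Unset Implicit Arguments.

Theorem theorem4p5 (R : realType) (d : measure_display) (X : measurableType d)
  (A : algType R[i]) (S : unital_Cstar_algebra A) (n : nat)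
  (I : set X -> A -> 'M[R[i]]_n) :
  UCP_instrument S I -> Cstar_extreme_instrument S I ->
  Cstar_extreme_POVM (marginal I).
Proof.
move=> HI HX; split.
  split; last exact: (proj2 HI).
  split; first by move=> E mE; exact: (mu_psd HI mE).
  by move=> h k; exact: (proj2 (proj1 HI)) 1 h k.
move=> m T mus Hmus HT Hsum Hdec i.
exact: (partC HI HX Hmus HT Hsum Hdec i).
Qed.
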